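(* Let $H$ be a cocommutative Hopf algebra, $M$ a left $H$-module, $\alpha\in H\otimes H$, and $m\in M$ an element that is not torsion (i.e. $hm=0$ with $h\in H$ implies $h=0$). Then $\alpha\otimes_H m=0$ in $(H\otimes H)\otimes_H M$ if and only if $\alpha=0$.
   Context: $H\otimes H$ is a right $H$-module via $\alpha\cdot h=\alpha\Delta(h)$, which defines $(H\otimes H)\otimes_H M$. *)

(* Defs.v *)
From HB Require Import structures.
From mathcomp Require Import all_boot all_order all_algebra.
Set Implicit Arguments. Unset Strict Implicit. Unset Printing Implicit Defensive.
Import Order.TTheory GRing.Theory Num.Theory.
Local Open Scope ring_scope.

(* A formal Z-linear combination of elements of X is a list of             *)
(* (coefficient, element) pairs; two formal combinations are equal in the  *)
(* free abelian group Z^(X) iff all their coefficients agree.             *)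

Definition fcoef (X : eqType) (s : seq (int * X)) (x : X) : int :=
  \sum_(p <- s | p.2 == x) p.1.

Definition in_subgroup (X : eqType) (G : seq (int * X) -> Prop)
    (s : seq (int * X)) : Prop :=
  exists gs : seq (int * seq (int * X)),
    (forall g, g \in gs -> G g.2) /\
    (forall x, fcoef s x = \sum_(g <- gs) g.1 * fcoef g.2 x).

(* Tensor product  X (x)_R Y  of a right R-module X and a left R-module Y,  *)
(* defined as the free abelian group on X * Y modulo the subgroup generated *)
(* by the usual relations.  The right module X is given by representatives *)
(* (type X) together with the relation xeq saying when two representatives *)
(* denote the same element; the relation (x,y) ~ (x',y) for xeq x x' makes  *)
(* the construction the free abelian group on (X/xeq) * Y modulo the usual  *)
(* biadditivity and balancing relations.  An element sum_i x_i (x) y_i is  *)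
(* represented by the list of pairs (x_i, y_i).                            *)

Section Tensor.
Variables (R : Type) (X : eqType) (xeq : X -> X -> Prop)
  (xadd : X -> X -> X) (ract : X -> R -> X)
  (Y : zmodType) (lact : R -> Y -> Y).

Definition tens_rel (g : seq (int * (X * Y))) : Prop :=
  [\/ exists x x' y, g = [:: (1%:Z, (xadd x x', y)); (-1, (x, y)); (-1, (x', y))],
      exists x y y', g = [:: (1%:Z, (x, y + y')); (-1, (x, y)); (-1, (x, y'))],
      exists x r y, g = [:: (1%:Z, (ract x r, y)); (-1, (x, lact r y))]
    | exists x x' y, xeq x x' /\ g = [:: (1%:Z, (x, y)); (-1, (x', y))]].

Definition tens_zero (t : seq (X * Y)) : Prop :=
  in_subgroup tens_rel [seq (1%:Z, p) | p <- t].

End Tensor.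

Section HopfDefs.
Variables (k : fieldType) (H : algType k).

Definition HH := seq (H * H).

Definition HH_zero (a : HH) : Prop :=
  tens_zero (fun x y : H => x = y) +%R (fun h (c : k) => c *: h)
            (fun (c : k) (h : H) => c *: h) a.

Definition HH_opp (a : HH) : HH := [seq (- p.1, p.2) | p <- a].
Definition HH_eq (a b : HH) : Prop := HH_zero (a ++ HH_opp b).
Definition HH_scale (c : k) (a : HH) : HH := [seq (c *: p.1, p.2) | p <- a].
Definition HH_mul (a b : HH) : HH :=
  [seq (p.1 * q.1, p.2 * q.2) | p <- a, q <- b].
Definition HH_swap (a : HH) : HH := [seq (p.2, p.1) | p <- a].

Definition HHH_zero (t : seq (HH * H)) : Prop :=
  tens_zero HH_eq cat (fun a (c : k) => HH_scale c a)
            (fun (c : k) (h : H) => c *: h) t.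
Definition HHH_eq (t u : seq (HH * H)) : Prop :=
  HHH_zero (t ++ [seq (p.1, - p.2) | p <- u]).

Variables (Delta : H -> HH) (eps : H -> k) (S : H -> H).

Definition Delta_id_Delta (h : H) : seq (HH * H) :=
  [seq ((Delta p.1), p.2) | p <- Delta h].
Definition id_Delta_Delta (h : H) : seq (HH * H) :=
  flatten [seq [seq ([:: (p.1, q.1)], q.2) | q <- Delta p.2] | p <- Delta h].

Definition hopf_algebra : Prop :=
      (forall (c : k) (g h : H), HH_eq (Delta (c *: g + h)) (HH_scale c (Delta g) ++ Delta h)) /\
      (forall g h : H, HH_eq (Delta (g * h)) (HH_mul (Delta g) (Delta h))) /\
      HH_eq (Delta 1) [:: (1, 1)] /\
      (forall h : H, HHH_eq (Delta_id_Delta h) (id_Delta_Delta h)) /\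
      (forall (c : k) (g h : H), eps (c *: g + h) = c * eps g + eps h)
        /\ (forall g h : H, eps (g * h) = eps g * eps h) /\ eps 1 = 1 /\
      (forall h : H, \sum_(p <- Delta h) eps p.1 *: p.2 = h
                  /\ \sum_(p <- Delta h) eps p.2 *: p.1 = h) /\
      (forall (c : k) (g h : H), S (c *: g + h) = c *: S g + S h) /\
      (forall h : H, \sum_(p <- Delta h) S p.1 * p.2 = eps h *: 1
                  /\ \sum_(p <- Delta h) p.1 * S p.2 = eps h *: 1).

Definition cocommutative : Prop := forall h : H, HH_eq (HH_swap (Delta h)) (Delta h).

Definition HH_ract (a : HH) (h : H) : HH := HH_mul a (Delta h).

Definition left_module (M : zmodType) (act : H -> M -> M) : Prop :=
  [/\ forall (g h : H) (m : M), act (g * h) m = act g (act h m),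
      forall m : M, act 1 m = m,
      forall (g h : H) (m : M), act (g + h) m = act g m + act h m
    & forall (h : H) (m n : M), act h (m + n) = act h m + act h n].

Definition not_torsion (M : zmodType) (act : H -> M -> M) (m : M) : Prop :=
  forall h : H, act h m = 0 -> h = 0.

Definition HHM_zero (M : zmodType) (act : H -> M -> M) (t : seq (HH * M)) : Prop :=
  tens_zero HH_eq cat HH_ract act t.

End HopfDefs.

(* Main.v *)
Require Import Defs.
From HB Require Import structures.
From mathcomp Require Import all_boot all_order all_algebra.
Set Implicit Arguments. Unset Strict Implicit. Unset Printing Implicit Defensive.
Import GRing.Theory.
Local Open Scope ring_scope.

Section Sub.
Variables (X : eqType) (G : seq (int * X) -> Prop).
Implicit Types (s : seq (int * X)) (x : X) (p : int * X).

Lemma fcoef_cat s s' x : fcoef (s ++ s') x = fcoef s x + fcoef s' x.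
Proof. by rewrite /fcoef big_cat. Qed.
Lemma fcoef_nil x : fcoef ([::] : seq (int * X)) x = 0.
Proof. by rewrite /fcoef big_nil. Qed.
Lemma fcoef_cons p s x : fcoef (p :: s) x = (if p.2 == x then p.1 else 0) + fcoef s x.
Proof. by rewrite /fcoef big_cons; case: ifP; rewrite ?add0r. Qed.

Definition negW (s : seq (int * X)) := [seq (- p.1, p.2) | p <- s].
Lemma fcoef_neg s x : fcoef (negW s) x = - fcoef s x.
Proof. by rewrite /fcoef big_map sumrN. Qed.

Lemma sub_ext s s' : (forall x, fcoef s x = fcoef s' x) -> in_subgroup G s -> in_subgroup G s'.
Proof. by move=> e [gs [Hg Hc]]; exists gs; split => // x; rewrite -e. Qed.
Lemma sub_nil : in_subgroup G [::].
Proof. by exists [::]; split => // x; rewrite fcoef_nil big_nil. Qed.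
Lemma sub_cat s s' : in_subgroup G s -> in_subgroup G s' -> in_subgroup G (s ++ s').
Proof.
move=> [gs [Hg Hc]] [gs' [Hg' Hc']]; exists (gs ++ gs'); split.
  by move=> g; rewrite mem_cat => /orP[]; [apply: Hg|apply: Hg'].
by move=> x; rewrite fcoef_cat big_cat Hc Hc'.
Qed.
Lemma sub_neg s : in_subgroup G s -> in_subgroup G (negW s).
Proof.
move=> [gs [Hg Hc]]; exists [seq (- g.1, g.2) | g <- gs]; split.
  by move=> g /mapP [g' /Hg ? ->].
by move=> x; rewrite fcoef_neg Hc big_map -sumrN; apply: eq_bigr => g _; rewrite mulNr.
Qed.
Lemma sub_gen g : G g -> in_subgroup G g.
Proof.
move=> Gg; exists [:: (1, g)]; split; first by move=> h; rewrite inE => /eqP ->.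
by move=> x; rewrite big_seq1 mul1r.
Qed.

Definition D s s' := exists d, in_subgroup G d /\ forall x, fcoef s x = fcoef s' x + fcoef d x.
Lemma D_sub s s' : D s s' -> in_subgroup G s' -> in_subgroup G s.
Proof. move=> [d [Gd e]] Gs'; apply: (sub_ext _ (sub_cat Gs' Gd)) => x; by rewrite e fcoef_cat. Qed.
Lemma D_ext s s' : (forall x, fcoef s x = fcoef s' x) -> D s s'.
Proof. by move=> e; exists [::]; split; [exact: sub_nil|] => x; rewrite fcoef_nil addr0. Qed.
Lemma D_refl s : D s s. Proof. exact: D_ext. Qed.
Lemma D_trans s1 s2 s3 : D s1 s2 -> D s2 s3 -> D s1 s3.
Proof.
move=> [d [Gd e]] [d' [Gd' e']]; exists (d' ++ d); split; first exact: sub_cat.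
by move=> x; rewrite e e' fcoef_cat addrA.
Qed.
Lemma D_sym s1 s2 : D s1 s2 -> D s2 s1.
Proof.
move=> [d [Gd e]]; exists (negW d); split; first exact: sub_neg.
by move=> x; rewrite e fcoef_neg addrK.
Qed.
Lemma D_cat s1 s1' s2 s2' : D s1 s1' -> D s2 s2' -> D (s1 ++ s2) (s1' ++ s2').
Proof.
move=> [d [Gd e]] [d' [Gd' e']]; exists (d ++ d'); split; first exact: sub_cat.
by move=> x; rewrite !fcoef_cat e e' !addrA; congr (_ + _); rewrite -!addrA; congr (_ + _); rewrite addrC.
Qed.
Lemma D_perm s s' : perm_eq s s' -> D s s'.
Proof. by move=> pe; apply: D_ext => x; rewrite /fcoef; apply: perm_big. Qed.
Lemma D_gen3 a b c : G [:: (1, a); (-1, b); (-1, c)] -> D [:: (1, a)] [:: (1, b); (1, c)].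
Proof.
move=> Gg; exists [:: (1, a); (-1, b); (-1, c)]; split; first exact: sub_gen.
move=> x; rewrite !fcoef_cons !fcoef_nil /=.
by case: (a == x); case: (b == x); case: (c == x); rewrite /= ?addr0 ?add0r ?addrK ?addKr ?subrr.
Qed.
Lemma D_gen2 a b : G [:: (1, a); (-1, b)] -> D [:: (1, a)] [:: (1, b)].
Proof.
move=> Gg; exists [:: (1, a); (-1, b)]; split; first exact: sub_gen.
move=> x; rewrite !fcoef_cons !fcoef_nil /=.
by case: (a == x); case: (b == x); rewrite /= ?addr0 ?add0r ?addrK ?addKr ?subrr.
Qed.
Lemma D_double s : D s (s ++ s) -> D s [::].
Proof.
move=> [d [Gd e]]; exists (negW d); split; first exact: sub_neg.
move=> x; rewrite fcoef_neg fcoef_nil add0r; move: (e x); rewrite fcoef_cat.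
move=> e'; have : fcoef s x + fcoef d x = 0.
  by apply: (addrI (fcoef s x)); rewrite addr0 addrA -e'.
by move/eqP; rewrite addr_eq0 => /eqP.
Qed.
End Sub.

Section Eval.
Variables (R : Type) (X : eqType) (xeq : X -> X -> Prop)
  (xadd : X -> X -> X) (ract : X -> R -> X)
  (Y : zmodType) (lact : R -> Y -> Y).
Variables (Gr : zmodType) (F : X -> Y -> Gr).
Hypothesis Fxadd : forall x x' y, F (xadd x x') y = F x y + F x' y.
Hypothesis Fyadd : forall x y y', F x (y + y') = F x y + F x y'.
Hypothesis Fract : forall x r y, F (ract x r) y = F x (lact r y).
Hypothesis Fxeq : forall x x' y, xeq x x' -> F x y = F x' y.

Definition ev (s : seq (int * (X * Y))) := \sum_(q <- s) F q.2.1 q.2.2 *~ q.1.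

Lemma ev_rel g : tens_rel xeq xadd ract lact g -> ev g = 0.
Proof.
rewrite /tens_rel /ev; case=> [[x [x' [y ->]]]|[x [y [y' ->]]]|[x [r [y ->]]]|[x [x' [y [e ->]]]]];
  rewrite !big_cons big_nil /= ?mulrz1 ?mulrN1z ?addr0.
- by rewrite Fxadd mulr1z -opprD subrr.
- by rewrite Fyadd mulr1z -opprD subrr.
- by rewrite Fract mulr1z subrr.
- by rewrite (Fxeq _ e) mulr1z subrr.
Qed.

Lemma ev_coef s (Ds : seq (X * Y)) : uniq Ds -> {subset map snd s <= Ds} ->
  ev s = \sum_(x <- Ds) F x.1 x.2 *~ fcoef s x.
Proof.
move=> uD sub; rewrite /ev /fcoef.
transitivity (\sum_(q <- s) \sum_(x <- Ds | q.2 == x) F x.1 x.2 *~ q.1).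
  apply: eq_big_seq => q qs; rewrite -big_filter.
  have -> : [seq x <- Ds | q.2 == x] = [:: q.2].
    rewrite (@eq_filter _ _ (pred1 q.2)); last by move=> z; rewrite /= eq_sym.
    by apply: filter_pred1_uniq => //; apply: sub; apply: map_f.
  by rewrite big_seq1.
under eq_bigr do rewrite big_mkcond.
rewrite exchange_big /=; apply: eq_bigr => x _.
rewrite mulrz_sumr [RHS]big_mkcond /=; apply: eq_bigr => q _.
by case: ifP => // /eqP ->.
Qed.

Lemma tens_zero_eval t : tens_zero xeq xadd ract lact t -> \sum_(p <- t) F p.1 p.2 = 0.
Proof.
move=> [gs [Hg Hc]].
set s := [seq (1%:Z, p) | p <- t] in Hc *.
have -> : \sum_(p <- t) F p.1 p.2 = ev s by rewrite /ev big_map; apply: eq_bigr => p _; rewrite mulr1z.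
set Ds := undup (map snd s ++ flatten [seq map snd g.2 | g <- gs]).
have uD : uniq Ds by exact: undup_uniq.
rewrite (@ev_coef s Ds) //; last by move=> x xs; rewrite mem_undup mem_cat xs.
under eq_bigr => x _ do rewrite Hc.
transitivity (\sum_(g <- gs) ev g.2 *~ g.1).
  rewrite [RHS](eq_big_seq (fun g => (\sum_(x <- Ds) F x.1 x.2 *~ fcoef g.2 x) *~ g.1)); last first.
    move=> g gg; rewrite (@ev_coef g.2 Ds) // => x xg.
    rewrite mem_undup mem_cat; apply/orP; right; apply/flattenP; exists (map snd g.2) => //.
    by apply: map_f.
  under [RHS]eq_bigr do rewrite mulrz_suml.
  rewrite exchange_big /=; apply: eq_bigr => x _.
  by rewrite mulrz_sumr; apply: eq_bigr => g _; rewrite mulrzA_C.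
rewrite big_seq big1 // => g gg; rewrite ev_rel ?mul0rz //; exact: Hg.
Qed.
End Eval.

From Stdlib Require Import Classical_Prop.

Module SepM.
From mathcomp Require Import boolp classical_sets.
Import GRing.Theory.
Local Open Scope ring_scope.
Local Open Scope classical_set_scope.

Lemma sep (k : fieldType) (V : lmodType k) (W : V -> Prop) (u : V) :
  W 0 -> (forall c x y, W x -> W y -> W (c *: x + y)) -> ~ W u ->
  exists f : V -> k, (forall c x y, f (c *: x + y) = c * f x + f y) /\
     f u = 1 /\ (forall w, W w -> f w = 0).
Proof.
move=> W0 Wl Wu.
pose cl (A : set V) := forall c x y, A x -> A y -> A (c *: x + y).
pose P := [set A : set V | cl A /\ ~ A u /\ (W `<=` A \/ A = set0)].
have [A [[clA [Au WA]] Amax]] : exists A, P A /\ forall B, A `<` B -> ~ P B.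
  apply: Zorn_bigcup => F FP Ftot; split; [|split].
  - move=> c x y [X FX Xx] [Y FY Yy].
    have [XY|YX] := Ftot _ _ FX FY.
    + exists Y => //; have [+ _] := FP _ FY; apply => //; exact: XY.
    + exists X => //; have [+ _] := FP _ FX; apply => //; exact: YX.
  - by move=> [X FX Xu]; have [_ [+ _]] := FP _ FX; apply.
  - have [[X FX WX]|] := pselect (exists2 X, F X & W `<=` X).
      by left => w Ww; exists X => //; exact: WX.
    move=> nX; right; apply/seteqP; split => // x [X FX Xx].
    have [_ [_ [WX|X0]]] := FP _ FX; first by case: nX; exists X.
    by move: Xx; rewrite X0.
have {WA} WA : W `<=` A.
  case: WA => // A0; exfalso; apply: (Amax W); last by split; [exact: Wl|split => //; left].
  rewrite A0; split => //; by move=> /(_ 0 W0).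
have A0 : A 0 by exact: WA.
have Ax x : exists c, A (x - c *: u).
  have [Axx|nAx] := pselect (A x); first by exists 0; rewrite scale0r subr0.
  pose B := [set y | exists d, A (y - d *: x)].
  have AB : A `<` B.
    split; first by move=> y Ay; exists 0; rewrite scale0r subr0.
    by move=> BA; apply: nAx; apply: BA; exists 1; rewrite scale1r subrr.
  have [d Bu] : B u.
    apply: contrapT => nBu; apply: (Amax B AB); split; [|split => //].
      move=> c y z [d1 H1] [d2 H2]; exists (c * d1 + d2).
      have -> : c *: y + z - (c * d1 + d2) *: x = c *: (y - d1 *: x) + (z - d2 *: x).
        by rewrite scalerDl -scalerA scalerBr opprD !addrA; congr (_ + _);
           rewrite -!addrA; congr (_ + _); rewrite addrC.
      exact: clA.
    by left => w Ww; exists 0; rewrite scale0r subr0; exact: WA.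
  have d0 : d != 0.
    by apply/eqP => d0; apply: Au; move: Bu; rewrite d0 scale0r subr0.
  exists d^-1.
  have -> : x - d^-1 *: u = (- d^-1) *: (u - d *: x) + 0.
    by rewrite addr0 scalerBr scalerA mulNr mulVf // scaleN1r opprK addrC scaleNr.
  exact: clA.
have uniq x c c' : A (x - c *: u) -> A (x - c' *: u) -> c = c'.
  move=> H1 H2; apply/eqP; apply: contraT => cc; apply/negP => _; apply: Au.
  have E : (x - c *: u) - (x - c' *: u) = (c' - c) *: u.
    by rewrite opprB addrC addrA subrK scalerBl.
  have cc' : c' - c != 0 by rewrite subr_eq0 eq_sym.
  have -> : u = (c' - c)^-1 *: (x - c *: u) + ((- (c' - c)^-1) *: (x - c' *: u) + 0).
    by rewrite addr0 scaleNr -scalerBr E scalerA mulVf // scale1r.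
  by apply: (clA) => //; apply: (clA).
pose f x := projT1 (cid (Ax x)).
have fP x : A (x - f x *: u) by rewrite /f; case: cid.
exists f; split; [|split].
- move=> c x y; apply: (uniq (c *: x + y)) (fP _) _.
  have -> : c *: x + y - (c * f x + f y) *: u = c *: (x - f x *: u) + (y - f y *: u).
    by rewrite scalerDl -scalerA scalerBr opprD !addrA; congr (_ + _);
       rewrite -!addrA; congr (_ + _); rewrite addrC.
  by apply: (clA).
- by apply: (uniq u) (fP _) _; rewrite scale1r subrr.
- move=> w Ww; apply: (uniq w) (fP _) _; rewrite scale0r subr0; exact: WA.
Qed.
End SepM.


Section KL.
Variables (k : fieldType) (H : algType k).

Definition Rel := tens_rel (fun x y : H => x = y) +%R (fun (h : H) (c : k) => c *: h)
            (fun (c : k) (h : H) => c *: h).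
Definition ones (t : seq (H * H)) := [seq (1%:Z, p) | p <- t].
Definition DH t t' := D Rel (ones t) (ones t').

Lemma DH_zero t t' : DH t t' -> HH_zero t' -> HH_zero t.
Proof. exact: D_sub. Qed.
Lemma DH_refl t : DH t t. Proof. exact: D_refl. Qed.
Lemma DH_trans t1 t2 t3 : DH t1 t2 -> DH t2 t3 -> DH t1 t3. Proof. exact: D_trans. Qed.
Lemma DH_sym t1 t2 : DH t1 t2 -> DH t2 t1. Proof. exact: D_sym. Qed.
Lemma DH_cat t1 t1' t2 t2' : DH t1 t1' -> DH t2 t2' -> DH (t1 ++ t2) (t1' ++ t2').
Proof. by move=> *; rewrite /DH /ones !map_cat; apply: D_cat. Qed.
Lemma DH_cons p t t' : DH t t' -> DH (p :: t) (p :: t').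
Proof. by move=> e; apply: (@DH_cat [:: p] [:: p] t t') => //; exact: DH_refl. Qed.
Lemma DH_perm t t' : perm_eq t t' -> DH t t'.
Proof. by move=> pe; apply: D_perm; apply: perm_map. Qed.

Lemma DH_cat1 p p' t : DH [:: p] p' -> DH (p :: t) (p' ++ t).
Proof. by move=> e; apply: (@DH_cat [:: p] p' t t) => //; exact: DH_refl. Qed.

Lemma DH_addl x x' y : DH [:: (x + x', y)] [:: (x, y); (x', y)].
Proof. by apply: D_gen3; apply: Or41; exists x, x', y. Qed.
Lemma DH_addr x y y' : DH [:: (x, y + y')] [:: (x, y); (x, y')].
Proof. by apply: D_gen3; apply: Or42; exists x, y, y'. Qed.
Lemma DH_bal c x y : DH [:: (c *: x, y)] [:: (x, c *: y)].
Proof. by apply: D_gen2; apply: Or43; exists x, c, y. Qed.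



Lemma DH_0l y : DH [:: (0, y)] [::].
Proof. apply: D_double; have := DH_addl 0 0 y; by rewrite addr0. Qed.
Lemma DH_0r x : DH [:: (x, 0)] [::].
Proof. apply: D_double; have := DH_addr x 0 0; by rewrite addr0. Qed.

Lemma linD (V W : lmodType k) (L : V -> W) :
  (forall c x y, L (c *: x + y) = c *: L x + L y) ->
  [/\ forall x y, L (x + y) = L x + L y, forall c x, L (c *: x) = c *: L x,
      L 0 = 0 & forall I (r : seq I) (F : I -> V), L (\sum_(i <- r) F i) = \sum_(i <- r) L (F i)].
Proof.
move=> hL.
have hD x y : L (x + y) = L x + L y by have := hL 1 x y; rewrite !scale1r.
have h0 : L 0 = 0 by have := hD 0 0; rewrite addr0 => e; apply: (addrI (L 0)); rewrite addr0 -e.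
have hZ c x : L (c *: x) = c *: L x by rewrite -[c *: x]addr0 hL h0 addr0.
split => // I r F; elim: r => [|a r IH]; rewrite ?big_nil ?big_cons //.
by rewrite hD IH.
Qed.

Definition lin (f : H -> k) := forall c x y, f (c *: x + y) = c * f x + f y.

Lemma linP f : lin f ->
  [/\ forall x y, f (x + y) = f x + f y, forall c x, f (c *: x) = c * f x,
      f 0 = 0 & forall I (r : seq I) (F : I -> H), f (\sum_(i <- r) F i) = \sum_(i <- r) f (F i)].
Proof. move=> hf; exact: (@linD H k^o f hf). Qed.


Definition tf (f : H -> k) (t : seq (H * H)) := \sum_(p <- t) f p.1 *: p.2.

Fixpoint sp (L : seq H) (x : H) : Prop :=
  match L with [::] => x = 0 | w :: L' => exists c y, sp L' y /\ x = c *: w + y end.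

Lemma sp0 L : sp L 0.
Proof. by elim: L => [|w L IH] //=; exists 0, 0; rewrite scale0r addr0. Qed.
Lemma spcl L c x y : sp L x -> sp L y -> sp L (c *: x + y).
Proof.
elim: L x y => [|w L IH] x y /=; first by move=> -> ->; rewrite scaler0 addr0.
move=> [a [x0 [hx ->]]] [b [y0 [hy ->]]]; exists (c * a + b), (c *: x0 + y0); split; first exact: IH.
rewrite scalerDr scalerDl scalerA !addrA; congr (_ + _); rewrite -!addrA; congr (_ + _).
by rewrite addrC.
Qed.
Lemma spmem L w : w \in L -> sp L w.
Proof.
elim: L => [|w0 L IH] //; rewrite inE => /orP[/eqP ->|wL] /=.
  by exists 1, 0; rewrite scale1r addr0; split => //; exact: sp0.
by exists 0, w; rewrite scale0r add0r; split => //; exact: IH.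
Qed.

Lemma shift t' u v : sp (map fst t') u -> exists t'', DH ((u, v) :: t') t'' /\
  size t'' = size t' /\ forall f, lin f -> tf f t'' = f u *: v + tf f t'.
Proof.
elim: t' u => [|[w y] t0 IH] u /=.
  move=> ->; exists [::]; split; first exact: DH_0l.
  by split => // f /linP [_ _ -> _]; rewrite /tf !big_nil scale0r addr0.
move=> [c [u0 [hu0 ->]]]; have [t0'' [D0 [s0 F0]]] := IH _ hu0.
exists ((w, y + c *: v) :: t0''); split; last split; first last.
- move=> f hf; have [fD fZ _ _] := linP hf.
  rewrite /tf !big_cons -!/(tf f _) F0 // fD fZ scalerDr scalerDl scalerA mulrC /=.
  by rewrite !addrA; congr (_ + _); rewrite -[LHS]addrA [LHS]addrC.
- by rewrite /= s0.
apply: (@DH_trans _ ([:: (c *: w, v); (u0, v)] ++ (w, y) :: t0)).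
  exact: (@DH_cat1 _ [:: (c *: w, v); (u0, v)] _ (DH_addl _ _ _)).
apply: (@DH_trans _ ([:: (w, c *: v); (u0, v)] ++ (w, y) :: t0)).
  apply: (@DH_cat [:: (c *: w, v); (u0, v)] _ ((w, y) :: t0)); last exact: DH_refl.
  exact: (@DH_cat1 _ [:: (w, c *: v)] [:: (u0, v)] (DH_bal _ _ _)).
apply: (@DH_trans _ ([:: (w, y); (w, c *: v)] ++ ((u0, v) :: t0))).
  by apply: DH_perm; rewrite (perm_catCA [:: (w, c *: v); (u0, v)] [:: (w, y)] t0).
exact: (@DH_cat [:: (w, y); (w, c *: v)] [:: (w, y + c *: v)] ((u0, v) :: t0) t0''
  (DH_sym (DH_addr _ _ _)) D0).
Qed.


Lemma KL t : (forall f, lin f -> tf f t = 0) -> HH_zero t.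
Proof.
move: {2}(size t) (leqnn (size t)) => n; elim: n t => [|n IH] [|[u v] t'] hs ht //; try exact: sub_nil.
rewrite /= ltnS in hs.
have [hsp|nsp] := classic (sp (map fst t') u).
  have [t'' [Dt [st Ft]]] := shift v hsp.
  apply: (DH_zero Dt); apply: IH; first by rewrite st.
  by move=> f hf; rewrite Ft //; have := ht f hf; rewrite /tf big_cons.
have [f0 [hf0 [f0u f0L]]] := SepM.sep (sp0 (map fst t')) (@spcl _) nsp.
have z0 : tf f0 t' = 0.
  rewrite /tf big_seq big1 // => p pt; rewrite f0L ?scale0r //; apply: spmem.
  exact: map_f.
have v0 : v = 0 by have := ht f0 hf0; rewrite /tf big_cons -/(tf f0 t') z0 addr0 f0u scale1r.
subst v; apply: (@DH_zero _ t'); first exact: (@DH_cat1 _ [::] _ (DH_0r u)).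
apply: IH => // f hf; have := ht f hf; rewrite /tf big_cons scaler0 add0r //.
Qed.

End KL.


Section Hopf.
Variables (k : fieldType) (H : algType k) (Delta : H -> HH H) (eps : H -> k) (S : H -> H).

Definition tsum (B : H -> H -> H) (a : HH H) := \sum_(p <- a) B p.1 p.2.
Definition bilin (B : H -> H -> H) :=
  (forall c x x' y, B (c *: x + x') y = c *: B x y + B x' y) /\
  (forall c x y y', B x (c *: y + y') = c *: B x y + B x y').
Definition trilin (T : H -> H -> H -> H) :=
  [/\ forall c x x' y z, T (c *: x + x') y z = c *: T x y z + T x' y z,
      forall c x y y' z, T x (c *: y + y') z = c *: T x y z + T x y' z &
      forall c x y z z', T x y (c *: z + z') = c *: T x y z + T x y z'].

Lemma bilinP B : bilin B ->
  [/\ forall x x' y, B (x + x') y = B x y + B x' y,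
      forall x y y', B x (y + y') = B x y + B x y',
      forall c x y, B (c *: x) y = c *: B x y &
      forall c x y, B x (c *: y) = c *: B x y].
Proof.
move=> [h1 h2]; split => [x x' y|x y y'|c x y|c x y].
- by have [] := linD (fun (c : k) (u u' : H) => h1 c u u' y).
- by have [] := linD (fun (c : k) => h2 c x).
- by have [] := linD (fun (c : k) (u u' : H) => h1 c u u' y).
- by have [] := linD (fun (c : k) => h2 c x).
Qed.

Lemma HH_zero_tsum B a : bilin B -> HH_zero a -> tsum B a = 0.
Proof.
move=> hB hz; have [bD1 bD2 bZ1 bZ2] := bilinP hB.
have := tens_zero_eval (F := B) bD1 bD2 _ _ hz; apply.
- by move=> x c y /=; rewrite bZ1 bZ2.
- by move=> x x' y ->.
Qed.

Lemma tsum_cat B a b : tsum B (a ++ b) = tsum B a + tsum B b.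
Proof. by rewrite /tsum big_cat. Qed.

Lemma HH_eq_tsum B a b : bilin B -> HH_eq a b -> tsum B a = tsum B b.
Proof.
move=> hB /(HH_zero_tsum hB); have [_ _ bZ1 _] := bilinP hB.
have bN x y : B (- x) y = - B x y by rewrite -scaleN1r bZ1 scaleN1r.
rewrite tsum_cat /tsum big_map.
under eq_bigr do rewrite /= bN.
by rewrite sumrN => /eqP; rewrite subr_eq0 => /eqP.
Qed.

Hypothesis hDl : forall (c : k) (g h : H), HH_eq (Delta (c *: g + h)) (HH_scale c (Delta g) ++ Delta h).
Hypothesis hDm : forall g h : H, HH_eq (Delta (g * h)) (HH_mul (Delta g) (Delta h)).
Hypothesis hco : forall h : H, HHH_eq (Delta_id_Delta Delta h) (id_Delta_Delta Delta h).
Hypothesis hepsl : forall (c : k) (g h : H), eps (c *: g + h) = c * eps g + eps h.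
Hypothesis hepsm : forall g h : H, eps (g * h) = eps g * eps h.
Hypothesis hcounit : forall h : H, \sum_(p <- Delta h) eps p.1 *: p.2 = h
                  /\ \sum_(p <- Delta h) eps p.2 *: p.1 = h.
Hypothesis hSl : forall (c : k) (g h : H), S (c *: g + h) = c *: S g + S h.
Hypothesis hant : forall h : H, \sum_(p <- Delta h) S p.1 * p.2 = eps h *: 1
                  /\ \sum_(p <- Delta h) p.1 * S p.2 = eps h *: 1.

Lemma tD B c g h : bilin B -> tsum B (Delta (c *: g + h)) = c *: tsum B (Delta g) + tsum B (Delta h).
Proof.
move=> hB; rewrite (HH_eq_tsum hB (hDl c g h)) tsum_cat; congr (_ + _).
have [_ _ bZ1 _] := bilinP hB.
by rewrite /tsum big_map scaler_sumr; apply: eq_bigr => p _; rewrite bZ1.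
Qed.

Lemma tM B g h : bilin B -> tsum B (Delta (g * h)) =
  \sum_(p <- Delta g) \sum_(q <- Delta h) B (p.1 * q.1) (p.2 * q.2).
Proof. by move=> hB; rewrite (HH_eq_tsum hB (hDm g h)) /tsum /HH_mul big_allpairs_dep. Qed.

Lemma coassoc T h : trilin T ->
  \sum_(p <- Delta h) \sum_(q <- Delta p.1) T q.1 q.2 p.2 =
  \sum_(p <- Delta h) \sum_(q <- Delta p.2) T p.1 q.1 q.2.
Proof.
move=> [t1 t2 t3].
pose F (a : HH H) (y : H) := tsum (fun u v => T u v y) a.
have hB y : bilin (fun u v => T u v y) by split => *; [rewrite t1|rewrite t2].
have T3 x y := linD (fun (c : k) => t3 c x y).
have T1 y z := linD (fun (c : k) x x' => t1 c x x' y z).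
have c1 x x' y : F (x ++ x') y = F x y + F x' y by rewrite /F /tsum big_cat.
have c2 x y y' : F x (y + y') = F x y + F x y'.
  by rewrite /F /tsum -big_split; apply: eq_bigr => p _; have [-> _ _ _] := T3 p.1 p.2.
have c3 x r y : F (HH_scale r x) y = F x (r *: y).
  rewrite /F /tsum big_map; apply: eq_bigr => p _ /=.
  by have [_ -> _ _] := T1 p.2 y; have [_ -> _ _] := T3 p.1 p.2.
have c4 x x' y : HH_eq x x' -> F x y = F x' y by move=> ?; apply: HH_eq_tsum.
have e := @tens_zero_eval k _ (@HH_eq k H) cat (fun a c => HH_scale c a) H
   (fun c h => c *: h) H F c1 c2 c3 c4 _ (hco h).
rewrite big_cat !big_map /F /tsum /= in e.
rewrite /id_Delta_Delta big_flatten big_map /= in e.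
apply/eqP; rewrite -subr_eq0; apply/eqP; rewrite -[RHS]e; congr (_ + _).
rewrite -sumrN; apply: eq_bigr => p _; rewrite big_map -sumrN; apply: eq_bigr => q _.
by rewrite big_seq1 /=; have [_ + _ _] := T3 p.1 q.1;
    move=> /(_ (-1) q.2); rewrite !scaleN1r.
Qed.



Lemma sAl (a : k) (u v : H) : (a *: u) * v = a *: (u * v). Proof. by rewrite scalerAl. Qed.
Lemma sAr (a : k) (u v : H) : u * (a *: v) = a *: (u * v). Proof. by rewrite scalerAr. Qed.

Lemma SD x y : S (x + y) = S x + S y. Proof. by have [] := linD hSl. Qed.
Lemma SZ c x : S (c *: x) = c *: S x. Proof. by have [] := linD hSl. Qed.
Lemma Ssum I (r : seq I) (F : I -> H) : S (\sum_(i <- r) F i) = \sum_(i <- r) S (F i).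
Proof. by have [] := linD hSl. Qed.

Lemma antA a x : \sum_(s <- Delta x) a * s.1 * S s.2 = eps x *: a.
Proof. by under eq_bigr do rewrite -mulrA; rewrite -mulr_sumr (proj2 (hant x)) sAr mulr1. Qed.
Lemma antA' a x : \sum_(s <- Delta x) a * S s.1 * s.2 = eps x *: a.
Proof. by under eq_bigr do rewrite -mulrA; rewrite -mulr_sumr (proj1 (hant x)) sAr mulr1. Qed.

Ltac sumlin := repeat (rewrite scaler_sumr -big_split; apply: eq_bigr => ? _).
Ltac mono := rewrite ?(mulrDl, mulrDr, sAl, sAr, SD, SZ, scalerDr, scalerA).

Lemma Santi g h : S (g * h) = S h * S g.
Proof.
transitivity (\sum_(p <- Delta g) \sum_(q <- Delta h) (eps p.2 * eps q.2) *: S (p.1 * q.1)).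
  rewrite -{1}(proj2 (hcounit g)) -{1}(proj2 (hcounit h)) mulr_suml Ssum.
  apply: eq_bigr => p _; rewrite mulr_sumr Ssum; apply: eq_bigr => q _.
  by rewrite sAl sAr scalerA SZ.
transitivity (\sum_(p <- Delta g) \sum_(q <- Delta h) \sum_(r <- Delta p.2)
   \sum_(s <- Delta q.2) S (p.1 * q.1) * r.1 * s.1 * S s.2 * S r.2).
  apply: eq_bigr => p _; apply: eq_bigr => q _.
  under eq_bigr do rewrite -mulr_suml antA sAl.
  by rewrite -scaler_sumr antA scalerA mulrC.
transitivity (\sum_(p <- Delta g) \sum_(r <- Delta p.1) \sum_(q <- Delta h)
   \sum_(s <- Delta q.2) S (r.1 * q.1) * r.2 * s.1 * S s.2 * S p.2).
  under eq_bigr do rewrite exchange_big.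
  pose T a b c := \sum_(q <- Delta h) \sum_(s <- Delta q.2) S (a * q.1) * b * s.1 * S s.2 * S c.
  have hT : trilin T by split => * /=; rewrite /T; sumlin; mono.
  by have := coassoc g hT; rewrite /T => ->.
transitivity (\sum_(p <- Delta g) \sum_(r <- Delta p.1) \sum_(q <- Delta h)
   \sum_(s <- Delta q.1) S (r.1 * s.1) * r.2 * s.2 * S q.2 * S p.2).
  apply: eq_bigr => p _; apply: eq_bigr => r _.
  pose T a b c := S (r.1 * a) * r.2 * b * S c * S p.2.
  have hT : trilin T by split => * /=; rewrite /T; mono.
  by have := coassoc h hT; rewrite /T => ->.
transitivity (\sum_(p <- Delta g) \sum_(q <- Delta h) (eps p.1 * eps q.1) *: (S q.2 * S p.2)).
  apply: eq_bigr => p _; rewrite exchange_big /=; apply: eq_bigr => q _.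
  pose B u v := S u * v.
  have hB : bilin B by split => *; rewrite /B; mono.
  have := tM p.1 q.1 hB; rewrite /tsum /B (proj1 (hant _)) hepsm => e.
  have -> : (eps p.1 * eps q.1) *: (S q.2 * S p.2) = (eps p.1 * eps q.1) *: 1 * (S q.2 * S p.2)
    by rewrite sAl mul1r.
  rewrite e mulr_suml; apply: eq_bigr => r _.
  rewrite mulr_suml; apply: eq_bigr => s _.
  by rewrite !mulrA.
rewrite -{2}(proj1 (hcounit g)) -{2}(proj1 (hcounit h)) !Ssum mulr_suml exchange_big /=.
apply: eq_bigr => p _; rewrite mulr_sumr; apply: eq_bigr => q _.
by rewrite !SZ sAl sAr scalerA mulrC.
Qed.


Definition Bth (f : H -> k) (x u v : H) : H := f (x * S u) *: v.
Definition Bf (f : H -> k) (x z : H) : H := tsum (Bth f x) (Delta z).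

Lemma Bth_bilin f x : lin f -> bilin (Bth f x).
Proof.
move=> hf; have [fD fZ _ _] := linP hf; rewrite /Bth; split => c u u' v.
  by rewrite hSl mulrDr sAr fD fZ scalerDl scalerA.
by rewrite scalerDr !scalerA mulrC.
Qed.

Lemma lem_star f x z h : lin f -> \sum_(q <- Delta h) Bf f (x * q.1) (z * q.2) = Bf f x z * h.
Proof.
move=> hf; have [fD fZ _ fsum] := linP hf.
transitivity (\sum_(p <- Delta z) \sum_(q <- Delta h) \sum_(r <- Delta q.2)
    f (x * q.1 * (S r.1 * S p.1)) *: (p.2 * r.2)).
  rewrite exchange_big /=; apply: eq_bigr => q _.
  rewrite /Bf (tM _ _ (Bth_bilin _ hf)); apply: eq_bigr => p _; apply: eq_bigr => r _.
  by rewrite /Bth Santi.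
transitivity (\sum_(p <- Delta z) \sum_(q <- Delta h) \sum_(r <- Delta q.1)
    f (x * r.1 * (S r.2 * S p.1)) *: (p.2 * q.2)).
  apply: eq_bigr => p _.
  pose T a b c := f (x * a * (S b * S p.1)) *: (p.2 * c).
  have hT : trilin T.
    rewrite /T; split => c u u' v.
    - by move=> w; rewrite mulrDr sAr mulrDl sAl fD fZ scalerDl scalerA.
    - by move=> w; rewrite hSl mulrDl sAl mulrDr sAr fD fZ scalerDl scalerA.
    - by move=> w; rewrite mulrDr sAr scalerDr !scalerA mulrC.
  by have := coassoc h hT; rewrite /T => ->.
rewrite /Bf /tsum mulr_suml; apply: eq_bigr => p _.
transitivity (\sum_(q <- Delta h) (eps q.1 * f (x * S p.1)) *: (p.2 * q.2)).
  apply: eq_bigr => q _; rewrite -scaler_suml -fsum.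
  by under eq_bigr do rewrite mulrA; rewrite -mulr_suml antA sAl fZ.
rewrite /Bth sAl -{2}(proj1 (hcounit h)) mulr_sumr scaler_sumr; apply: eq_bigr => q _.
by rewrite sAr scalerA mulrC.
Qed.

Lemma lem_2star g x z : lin g ->
  \sum_(p <- Delta z) \sum_(q <- Delta p.2) g ((x * S p.1) * q.1) *: q.2 = g x *: z.
Proof.
move=> hg; have [gD gZ _ gsum] := linP hg.
pose T (a b c : H) : H := g (x * S a * b) *: c.
have hT : trilin T.
  rewrite /T; split => c u u' v.
  - by move=> w; rewrite hSl mulrDr sAr mulrDl sAl gD gZ scalerDl scalerA.
  - by move=> w; rewrite mulrDr sAr gD gZ scalerDl scalerA.
  - by move=> w; rewrite scalerDr !scalerA mulrC.
have := coassoc z hT; rewrite /T => <-.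
rewrite -{2}(proj1 (hcounit z)) scaler_sumr; apply: eq_bigr => p _.
by rewrite -scaler_suml -gsum antA' gZ scalerA mulrC.
Qed.


Lemma Bf_bilin f : lin f -> bilin (Bf f).
Proof.
move=> hf; have [fD fZ _ _] := linP hf; split => c x x' y.
  rewrite /Bf /tsum scaler_sumr -big_split; apply: eq_bigr => p _.
  by rewrite /Bth mulrDl sAl fD fZ scalerDl scalerA.
by rewrite /Bf tD //; apply: Bth_bilin.
Qed.

Definition Bg (g : H -> k) (u v : H) : H := tsum (fun q1 q2 => g (u * q1) *: q2) (Delta v).

Lemma Bg_bilin g : lin g -> bilin (Bg g).
Proof.
move=> hg; have [gD gZ _ _] := linP hg.
have hb u : bilin (fun q1 q2 => g (u * q1) *: q2).
  split => c x x' y.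
    by rewrite mulrDr sAr gD gZ scalerDl scalerA.
  by rewrite scalerDr !scalerA mulrC.
split => c x x' y.
  rewrite /Bg /tsum scaler_sumr -big_split; apply: eq_bigr => p _.
  by rewrite mulrDl sAl gD gZ scalerDl scalerA.
by rewrite /Bg tD.
Qed.

Lemma main_dir (M : zmodType) (act : H -> M -> M) (hM : left_module act)
  (alpha : HH H) (m : M) (hm : not_torsion act m) :
  HHM_zero Delta act [:: (alpha, m)] -> HH_zero alpha.
Proof.
move=> hz; case: hM => actM act1 actD actD2.
pose th := [seq (p.1 * S q.1, q.2) | p <- alpha, q <- Delta p.2].
have Zth : HH_zero th.
  apply: KL => f hf.
  pose F (a : HH H) (y : M) := act (tsum (Bf f) a) y.
  have c1 x x' y : F (x ++ x') y = F x y + F x' y by rewrite /F tsum_cat actD.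
  have c2 x y y' : F x (y + y') = F x y + F x y' by rewrite /F actD2.
  have c3 x h y : F (HH_ract Delta x h) y = F x (act h y).
    rewrite /F -actM; congr (act _ y).
    rewrite /HH_ract /HH_mul /tsum big_allpairs_dep mulr_suml; apply: eq_bigr => p _.
    exact: lem_star.
  have c4 x x' y : HH_eq x x' -> F x y = F x' y.
    by move=> e; rewrite /F (HH_eq_tsum (Bf_bilin hf) e).
  have := @tens_zero_eval H _ (@HH_eq k H) cat (HH_ract Delta) M act M F c1 c2 c3 c4 _ hz.
  rewrite big_seq1 /F => /hm.
  by rewrite /tsum /tf /th big_allpairs_dep.
apply: KL => g hg.
have := HH_zero_tsum (Bg_bilin hg) Zth.
rewrite /tsum /th big_allpairs_dep /tf => e; apply: etrans e; apply: eq_bigr => p _.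
by rewrite /Bg /tsum -lem_2star.
Qed.

End Hopf.


Theorem lemma2p8 (k : fieldType) (H : algType k)
    (Delta : H -> HH H) (eps : H -> k) (S : H -> H)
    (hHopf : hopf_algebra Delta eps S) (hcoc : cocommutative Delta)
    (M : zmodType) (act : H -> M -> M) (hM : left_module act)
    (alpha : HH H) (m : M) (hm : not_torsion act m) :
  HHM_zero Delta act [:: (alpha, m)] <-> HH_zero alpha.
Proof.
case: hHopf => hDl [hDm [hD1 [hco [hepsl [hepsm [heps1 [hcounit [hSl hant]]]]]]]].
split; first exact: (main_dir hDl hDm hco hepsm hcounit hSl hant hM hm).
move=> hz.
pose G := tens_rel (@HH_eq k H) cat (HH_ract Delta) act.
have e1 : D G [:: (1, (alpha, m))] [:: (1, ([::], m))].
  apply: D_gen2; apply: Or44; exists alpha, [::], m; split => //.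
  by rewrite /HH_eq /= cats0.
have e2 : D G [:: (1, ([::] : HH H, m))] [::].
  by apply: D_double; apply: D_gen3; apply: Or41; exists [::], [::], m.
exact: (D_sub (D_trans e1 e2) (sub_nil G)).
Qed.
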